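(* Let $G$ be a finitely generated torsion-free group and $l:G\to\mathbb{Z}^n$ a proper, $\delta$-regular, $\delta$-hyperbolic length function with $ht(\delta)=1$ and such that $G_1=\{g\in G\mid ht(l(g))\le1\}$ is a finitely generated isolated subgroup of $G$. Then $G_1$ is a torsion-free word hyperbolic group, and $G_1$ (with a word metric for a finite generating set) is quasi-isometric to $(G_1,d_l)$, where $d_l(g,h)$ is the first coordinate of $l(g^{-1}h)$.
   Context: $\mathbb{Z}^n$ carries the right lexicographic order ($a<b$ iff $a_j<b_j$ for the largest $j$ with $a_j\ne b_j$); $ht(a)$ is the largest index with $a_k\ne0$, $ht(0)=0$. Length function: $l(1)=0$, $l(g)\ge0$, $l(g^{-1})=l(g)$, $l(gh)\le l(g)+l(h)$; $c(g,h)=\tfrac12(l(g)+l(h)-l(g^{-1}h))$; $\delta$-hyperbolic: $c(f,g)\ge\min\{c(f,h),c(g,h)\}-\delta$ for all $f,g,h$; $\delta$-regular: for all $g,h$ exist $g_c,h_c,g_d,h_d$ with $l(g_c)=l(h_c)=c(g,h)$, $g=g_cg_d$, $h=h_ch_d$, $l(g)=l(g_c)+l(g_d)$, $l(h)=l(h_c)+l(h_d)$, $l(g_c^{-1}h_c)\le4\delta$. Proper: $\{g\mid l(g)\le(k,0,\dots,0)\}$ is finite for all $k\in\mathbb{N}$. Isolated subgroup $H$: $g^m\in H$ for a nonzero integer $m$ implies $g\in H$. *)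

(* Defs.v *)
From Stdlib Require Import ZArith List Lia.
Open Scope Z_scope.

Record is_group {G : Type} (mul : G -> G -> G) (inv : G -> G) (one : G) : Prop := {
  grp_assoc : forall x y z, mul x (mul y z) = mul (mul x y) z;
  grp_one_l : forall x, mul one x = x;
  grp_inv_l : forall x, mul (inv x) x = one }.

Fixpoint gpow {G : Type} (mul : G -> G -> G) (one : G) (g : G) (m : nat) : G :=
  match m with O => one | S m' => mul g (gpow mul one g m') end.

Definition zpow {G : Type} (mul : G -> G -> G) (inv : G -> G) (one : G) (g : G) (m : Z) : G :=
  match m with
  | Z0 => one
  | Zpos p => gpow mul one g (Pos.to_nat p)
  | Zneg p => inv (gpow mul one g (Pos.to_nat p))
  end.

Definition torsion_free {G : Type} (mul : G -> G -> G) (one : G) (P : G -> Prop) : Prop :=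
  forall g, P g -> forall m : nat, (0 < m)%nat -> gpow mul one g m = one -> g = one.

Fixpoint reach {G : Type} (mul : G -> G -> G) (inv : G -> G) (one : G)
    (S : list G) (k : nat) (x : G) : Prop :=
  match k with
  | O => x = one
  | S k' => reach mul inv one S k' x \/
            exists s y, In s S /\ reach mul inv one S k' y /\
                        (x = mul y s \/ x = mul y (inv s))
  end.

Definition generates {G : Type} (mul : G -> G -> G) (inv : G -> G) (one : G)
    (H : G -> Prop) (S : list G) : Prop :=
  (forall s, In s S -> H s) /\ (forall g, H g -> exists k, reach mul inv one S k g).

Definition fin_generated {G : Type} (mul : G -> G -> G) (inv : G -> G) (one : G)
    (H : G -> Prop) : Prop := exists S, generates mul inv one H S.

Definition is_subgroup {G : Type} (mul : G -> G -> G) (inv : G -> G) (one : G)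
    (H : G -> Prop) : Prop :=
  H one /\ (forall x y, H x -> H y -> H (mul x y)) /\ (forall x, H x -> H (inv x)).

Definition isolated {G : Type} (mul : G -> G -> G) (inv : G -> G) (one : G)
    (H : G -> Prop) : Prop :=
  forall g (m : Z), m <> 0 -> H (zpow mul inv one g m) -> H g.

Definition is_wlen {G : Type} (mul : G -> G -> G) (inv : G -> G) (one : G)
    (S : list G) (g : G) (k : nat) : Prop :=
  reach mul inv one S k g /\ forall j, reach mul inv one S j g -> (k <= j)%nat.

(* ---------- Z^n with the right lexicographic order ----------
   A vector of Z^n is a function nat -> Z; coordinate a_{i+1} is (a i),
   only indices i < n matter. *)
Definition vec := nat -> Z.
Definition vadd (a b : vec) : vec := fun i => a i + b i.
Definition vsub (a b : vec) : vec := fun i => a i - b i.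
Definition vscal (k : Z) (a : vec) : vec := fun i => k * a i.
Definition vzero : vec := fun _ => 0.
Definition veq (n : nat) (a b : vec) : Prop := forall i, (i < n)%nat -> a i = b i.

Fixpoint vcmp_aux (a b : vec) (m : nat) : comparison :=
  match m with
  | O => Eq
  | S m' => match Z.compare (a m') (b m') with
            | Eq => vcmp_aux a b m'
            | c => c
            end
  end.
Definition vcmp (n : nat) (a b : vec) : comparison := vcmp_aux a b n.
Definition vle (n : nat) (a b : vec) : Prop := vcmp n a b <> Gt.
Definition vmin (n : nat) (a b : vec) : vec :=
  match vcmp n a b with Gt => b | _ => a end.

(* ht(a): largest (1-based) index k <= n with a_k <> 0, and 0 for a = 0 *)
Fixpoint ht_aux (a : vec) (m : nat) : nat :=
  match m with
  | O => O
  | S m' => if Z.eqb (a m') 0 then ht_aux a m' else m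
  end.
Definition ht (n : nat) (a : vec) : nat := ht_aux a n.

Definition e1 (k : nat) : vec := fun i => match i with O => Z.of_nat k | _ => 0 end.

Section LF.
Context {G : Type} (mul : G -> G -> G) (inv : G -> G) (one : G) (n : nat) (l : G -> vec).

Definition length_function : Prop :=
  veq n (l one) vzero /\
  (forall g, vle n vzero (l g)) /\
  (forall g, veq n (l (inv g)) (l g)) /\
  (forall g h, vle n (l (mul g h)) (vadd (l g) (l h))).

(* 2 c(g,h) = l(g) + l(h) - l(g^{-1} h)  (doubled to stay in Z^n) *)
Definition c2 (g h : G) : vec := vsub (vadd (l g) (l h)) (l (mul (inv g) h)).

Definition hyperbolic_lf (delta : vec) : Prop :=
  forall f g h, vle n (vsub (vmin n (c2 f h) (c2 g h)) (vscal 2 delta)) (c2 f g).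

Definition regular_lf (delta : vec) : Prop :=
  forall g h, exists gc hc gd hd,
    veq n (vscal 2 (l gc)) (c2 g h) /\ veq n (vscal 2 (l hc)) (c2 g h) /\
    g = mul gc gd /\ h = mul hc hd /\
    veq n (l g) (vadd (l gc) (l gd)) /\ veq n (l h) (vadd (l hc) (l hd)) /\
    vle n (l (mul (inv gc) hc)) (vscal 4 delta).

Definition proper_lf : Prop :=
  forall k : nat, exists L : list G, forall g, vle n (l g) (e1 k) -> In g L.

Definition dl (g h : G) : Z := l (mul (inv g) h) O.
End LF.

(* Gromov hyperbolicity of the word metric d_S restricted to H (4-point
   condition via Gromov products, doubled):
   (x|z)_w >= min((x|y)_w, (y|z)_w) - D *)
Definition word_hyperbolic_wrt {G : Type} (mul : G -> G -> G) (inv : G -> G) (one : G)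
    (H : G -> Prop) (S : list G) : Prop :=
  exists D : nat, forall w x y z : G, H w -> H x -> H y -> H z ->
    forall dwx dwy dwz dxy dyz dxz : nat,
      is_wlen mul inv one S (mul (inv w) x) dwx ->
      is_wlen mul inv one S (mul (inv w) y) dwy ->
      is_wlen mul inv one S (mul (inv w) z) dwz ->
      is_wlen mul inv one S (mul (inv x) y) dxy ->
      is_wlen mul inv one S (mul (inv y) z) dyz ->
      is_wlen mul inv one S (mul (inv x) z) dxz ->
      Z.of_nat dwx + Z.of_nat dwz - Z.of_nat dxz >=
        Z.min (Z.of_nat dwx + Z.of_nat dwy - Z.of_nat dxy)
              (Z.of_nat dwy + Z.of_nat dwz - Z.of_nat dyz) - 2 * Z.of_nat D.

Definition word_hyperbolic {G : Type} (mul : G -> G -> G) (inv : G -> G) (one : G)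
    (H : G -> Prop) : Prop :=
  exists S, generates mul inv one H S /\ word_hyperbolic_wrt mul inv one H S.

Definition quasi_isometric_word {G : Type} (mul : G -> G -> G) (inv : G -> G) (one : G)
    (H : G -> Prop) (S : list G) (d : G -> G -> Z) : Prop :=
  exists (f : G -> G) (lam C : Z), 1 <= lam /\ 0 <= C /\
    (forall x, H x -> H (f x)) /\
    (forall x y k, H x -> H y -> is_wlen mul inv one S (mul (inv x) y) k ->
        Z.of_nat k <= lam * d (f x) (f y) + C /\ d (f x) (f y) <= lam * Z.of_nat k + C) /\
    (forall y, H y -> exists x, H x /\ d (f x) y <= C).

(* Main.v *)
Require Import Defs.
From Stdlib Require Import Arith ZArith List Lia Classical IndefiniteDescription ProofIrrelevance.
Open Scope Z_scope.

Lemma ivt : forall (f : nat -> Z) s m, f 0%nat <= s -> s < f m ->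
  exists k, (k < m)%nat /\ f k <= s < f (S k).
Proof.
  intros f s m H0. induction m as [|m IH]; intros H1.
  - lia.
  - destruct (Z_lt_le_dec s (f m)) as [H|H].
    + destruct (IH H) as [k [Hk1 Hk2]]. exists k; split; [lia|auto].
    + exists m; split; [lia|lia].
Qed.

Lemma last_true : forall (P : nat -> Prop) m, P 0%nat ->
  exists k, (k <= m)%nat /\ P k /\ (k = m \/ ~ P (S k)).
Proof.
  intros P m H0. induction m as [|m IH].
  - exists 0%nat. auto.
  - destruct IH as [k [Hk [Pk [E|NP]]]].
    + subst k. destruct (classic (P (S m))) as [Q|Q].
      * exists (S m). auto.
      * exists m. auto.
    + exists k. split; [lia|]. auto.
Qed.

Lemma pow_sq : forall j, ((4+j)*(4+j) <= 2^(4+j))%nat.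
Proof.
  induction j as [|j IH].
  - simpl. lia.
  - replace (4 + S j)%nat with (S (4 + j)) by lia. rewrite Nat.pow_succ_r'. nia.
Qed.

Lemma pow_bound : forall A B : Z, exists K0 : Z, forall kk : nat,
  Z.of_nat (2^kk) < A * Z.of_nat kk + B -> Z.of_nat kk <= K0.
Proof.
  intros A B. exists (Z.abs A + Z.abs B + 4). intros kk H.
  destruct (Z_le_gt_dec (Z.of_nat kk) (Z.abs A + Z.abs B + 4)) as [L|L]; auto.
  exfalso. assert (Hk : (4 <= kk)%nat) by lia.
  pose proof (pow_sq (kk - 4)) as P. replace (4 + (kk-4))%nat with kk in P by lia.
  apply Nat2Z.inj_le in P. rewrite Nat2Z.inj_mul in P.
  assert (A * Z.of_nat kk <= Z.abs A * Z.of_nat kk) by (apply Z.mul_le_mono_nonneg_r; lia).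
  nia.
Qed.

Lemma log2_ex : forall N : nat, exists kk, (N <= 2^kk)%nat /\ (kk = 0%nat \/ (1 <= kk /\ 2^(kk-1) < N)%nat).
Proof.
  intros N. destruct (le_lt_dec N 1) as [H|H].
  - exists 0%nat. simpl. lia.
  - exists (Nat.log2_up N). pose proof (Nat.log2_up_spec N H) as [A1 A2].
    split; auto. right. split. { destruct (Nat.log2_up N); simpl in *; lia. } replace (Nat.log2_up N - 1)%nat with (Nat.pred (Nat.log2_up N)) by lia. auto.
Qed.

Section Abs.
Variable X : Type.
Variable d ds : X -> X -> Z.
Variables dl M Lam : Z.
Hypothesis Hdl : 0 <= dl.
Hypothesis HM : 1 <= M.
Hypothesis HLam : 1 <= Lam.
Hypothesis d_refl : forall x, d x x = 0.
Hypothesis d_sym : forall x y, d x y = d y x.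
Hypothesis d_tri : forall x y z, d x z <= d x y + d y z.
Definition P2 (a b w : X) := d w a + d w b - d a b.
Hypothesis hyp4 : forall w a b c, Z.min (P2 a b w) (P2 b c w) - dl <= P2 a c w.
Hypothesis Hsplit : forall x y, 1 <= d x y -> exists z, d x z + d z y = d x y /\ 1 <= d x z <= M.
Hypothesis ds_refl : forall x, ds x x = 0.
Hypothesis ds_sym : forall x y, ds x y = ds y x.
Hypothesis ds_tri : forall x y z, ds x z <= ds x y + ds y z.
Hypothesis ds_path : forall x y, exists (j : nat) (v : nat -> X), Z.of_nat j <= ds x y /\
   v 0%nat = x /\ v j = y /\ forall i, (i < j)%nat -> ds (v i) (v (S i)) <= 1.
Hypothesis Hlow : forall x y, d x y <= M * ds x y.
Hypothesis Hup : forall x y, ds x y <= Lam * d x y + Lam.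

Lemma d_nn : forall x y, 0 <= d x y.
Proof. intros x y. pose proof (d_tri x y x). rewrite d_refl, (d_sym y x) in H. lia. Qed.
Lemma ds_nn : forall x y, 0 <= ds x y.
Proof. intros x y. pose proof (ds_tri x y x). rewrite ds_refl, (ds_sym y x) in H. lia. Qed.

Lemma LL : forall (k : nat) (N : nat) (x : nat -> X) (w : X) (m : Z),
  (N <= 2 ^ k)%nat ->
  (N = 0%nat -> m <= 2 * d w (x 0%nat)) ->
  (forall j, (j < N)%nat -> m <= P2 (x j) (x (S j)) w) ->
  m - dl * Z.of_nat k <= P2 (x 0%nat) (x N) w.
Proof.
  induction k as [|k IH]; intros N x w m HN H0 Hs.
  - simpl in HN. destruct N as [|[|N]].
    + specialize (H0 eq_refl). unfold P2. rewrite d_refl. lia.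
    + specialize (Hs 0%nat ltac:(lia)). simpl. lia.
    + lia.
  - destruct (le_lt_dec N (2^k)) as [Hle|Hlt].
    + specialize (IH N x w m Hle H0 Hs). rewrite Nat2Z.inj_succ. nia.
    + pose proof (Nat.pow_nonzero 2 k ltac:(lia)) as Hnz.
      simpl in HN.
      assert (A1 := IH (2^k)%nat x w m (le_n _) ltac:(lia) (fun j Hj => Hs j ltac:(lia))).
      assert (A2 : m - dl * Z.of_nat k <= P2 (x (2^k)%nat) (x N) w).
      { pose proof (IH (N - 2^k)%nat (fun u => x (2^k + u)%nat) w m ltac:(lia) ltac:(lia)) as Q.
        simpl in Q. rewrite Nat.add_0_r in Q. replace (2^k + (N - 2^k))%nat with N in Q by lia.
        apply Q. intros j Hj. replace (2^k + S j)%nat with (S (2^k + j)) by lia. apply Hs. lia. }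
      pose proof (hyp4 w (x 0%nat) (x (2^k)%nat) (x N)). rewrite Nat2Z.inj_succ. nia.
Qed.

Definition chain (x y : X) (a : nat -> X) (m : nat) :=
  a 0%nat = x /\ a m = y /\ Z.of_nat m <= d x y + 1 /\
  (forall i, (i < m)%nat -> d (a i) (a (S i)) <= M) /\
  (forall i j k, (i <= j)%nat -> (j <= k)%nat -> (k <= m)%nat -> d (a i) (a j) + d (a j) (a k) = d (a i) (a k)).

Lemma chain_zero : forall x y, d x y <= 0 -> exists a m, chain x y a m.
Proof.
  intros x y H0.
  exists (fun i => match i with 0%nat => x | _ => y end), 1%nat.
  pose proof (d_nn x y). assert (d x y = 0) by lia.
  unfold chain. repeat split; auto; try lia.
  + intros i Hi. destruct i; [|lia]. lia.
  + intros i j k Hij Hjk Hk. destruct i as [|[|i]]; destruct j as [|[|j]]; destruct k as [|[|k]]; try lia;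
    rewrite ?d_refl; lia.
Qed.

Lemma chain_exists : forall x y, exists a m, chain x y a m.
Proof.
  assert (forall n x y, (Z.to_nat (d x y) <= n)%nat -> exists a m, chain x y a m).
  { induction n as [|n IH]; intros x y Hn.
    - apply chain_zero. lia.
    - destruct (Z_le_gt_dec 1 (d x y)) as [H1|H1].
      + destruct (Hsplit x y H1) as [z [Hz1 Hz2]].
        destruct (IH z y ltac:(lia)) as [a' [m' [A0 [Am [Al [As Aadd]]]]]].
        assert (key : forall k, (k <= m')%nat -> d x (a' k) = d x z + d z (a' k)).
        { intros k Hk. pose proof (d_tri x z (a' k)). pose proof (d_tri x (a' k) y).
          pose proof (Aadd 0%nat k m' ltac:(lia) Hk (le_n _)). rewrite A0, Am in H2. lia. }
        exists (fun i => match i with 0%nat => x | S i' => a' i' end), (S m').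
        unfold chain. repeat split; auto.
        * lia.
        * intros i Hi. destruct i. rewrite A0. lia. apply As. lia.
        * intros i j k Hij Hjk Hk. destruct i as [|i]; destruct j as [|j]; destruct k as [|k]; try lia.
          -- rewrite d_refl. lia.
          -- rewrite d_refl. lia.
          -- rewrite (key j), (key k) by lia. pose proof (Aadd 0%nat j k ltac:(lia) ltac:(lia) ltac:(lia)).
             rewrite A0 in H. lia.
          -- apply Aadd; lia.
      + apply chain_zero. lia.
  }
  intros x y. apply (H (Z.to_nat (d x y))). lia.
Qed.

Lemma chain_t : forall x y a m i j, chain x y a m -> (i <= j)%nat -> (j <= m)%nat ->
  d (a i) (a j) = d x (a j) - d x (a i).
Proof.
  intros x y a m i j [A0 [_ [_ [_ Ad]]]] Hij Hj.
  pose proof (Ad 0%nat i j ltac:(lia) Hij Hj). rewrite A0 in H. lia.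
Qed.

Lemma chain_end : forall x y a m i, chain x y a m -> (i <= m)%nat ->
  d x (a i) + d (a i) y = d x y.
Proof.
  intros x y a m i [A0 [Am [_ [_ Ad]]]] Hi.
  pose proof (Ad 0%nat i m ltac:(lia) Hi (le_n _)). rewrite A0, Am in H. lia.
Qed.

Fixpoint mind (v : nat -> X) (a : X) (K : nat) : Z :=
  match K with 0%nat => d a (v 0%nat) | S K' => Z.min (mind v a K') (d a (v (S K'))) end.
Lemma mind_le : forall v a K i, (i <= K)%nat -> mind v a K <= d a (v i).
Proof.
  intros v a K. induction K as [|K IH]; intros i Hi; simpl.
  - replace i with 0%nat by lia. lia.
  - destruct (Nat.eq_dec i (S K)). subst. lia. specialize (IH i ltac:(lia)). lia.
Qed.
Lemma mind_att : forall v a K, exists i, (i <= K)%nat /\ mind v a K = d a (v i).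
Proof.
  intros v a K. induction K as [|K IH]; simpl.
  - exists 0%nat. auto.
  - destruct IH as [i [Hi E]]. destruct (Z_le_gt_dec (mind v a K) (d a (v (S K)))).
    + exists i. split. lia. lia.
    + exists (S K). split. lia. lia.
Qed.
Fixpoint maxd (v : nat -> X) (a : nat -> X) (K m : nat) : Z :=
  match m with 0%nat => mind v (a 0%nat) K | S m' => Z.max (maxd v a K m') (mind v (a (S m')) K) end.
Lemma maxd_ge : forall v a K m k, (k <= m)%nat -> mind v (a k) K <= maxd v a K m.
Proof.
  intros v a K m. induction m as [|m IH]; intros k Hk; simpl.
  - replace k with 0%nat by lia. lia.
  - destruct (Nat.eq_dec k (S m)). subst. lia. specialize (IH k ltac:(lia)). lia.
Qed.
Lemma maxd_att : forall v a K m, exists k, (k <= m)%nat /\ maxd v a K m = mind v (a k) K.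
Proof.
  intros v a K m. induction m as [|m IH]; simpl.
  - exists 0%nat. auto.
  - destruct IH as [i [Hi E]]. destruct (Z_le_gt_dec (maxd v a K m) (mind v (a (S m)) K)).
    + exists (S m). split. lia. lia.
    + exists i. split. lia. lia.
Qed.

Definition geod (x y : X) (v : nat -> X) (K : nat) :=
  v 0%nat = x /\ v K = y /\ forall i j, (i <= K)%nat -> (j <= K)%nat ->
     ds (v i) (v j) = Z.abs (Z.of_nat i - Z.of_nat j).

Lemma path_le : forall (v : nat -> X) j, (forall i, (i < j)%nat -> ds (v i) (v (S i)) <= 1) ->
  forall i i', (i <= i')%nat -> (i' <= j)%nat -> ds (v i) (v i') <= Z.of_nat i' - Z.of_nat i.
Proof.
  intros v j Hs i i'. induction i' as [|i' IH]; intros H1 H2.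
  - replace i with 0%nat by lia. rewrite ds_refl. lia.
  - destruct (Nat.eq_dec i (S i')). subst. rewrite ds_refl. lia.
    specialize (IH ltac:(lia) ltac:(lia)). pose proof (ds_tri (v i) (v i') (v (S i'))).
    specialize (Hs i' ltac:(lia)). lia.
Qed.

Lemma geod_exists : forall x y, exists v K, geod x y v K.
Proof.
  intros x y. destruct (ds_path x y) as [j [v [Hj [V0 [Vj Hs]]]]].
  pose proof (path_le v j Hs) as PL.
  assert (Hxy : ds x y <= Z.of_nat j) by (rewrite <- V0, <- Vj; specialize (PL 0%nat j); lia).
  exists v, j. split; auto. split; auto.
  assert (forall i i', (i <= i')%nat -> (i' <= j)%nat -> ds (v i) (v i') = Z.of_nat i' - Z.of_nat i).
  { intros i i' H1 H2. pose proof (PL i i' H1 H2). pose proof (PL 0%nat i ltac:(lia) ltac:(lia)).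
    pose proof (PL i' j H2 (le_n _)). pose proof (ds_tri x (v i) y). pose proof (ds_tri (v i) (v i') y).
    rewrite V0 in *. rewrite Vj in *. lia. }
  intros i i' H1 H2. destruct (le_lt_dec i i').
  - rewrite H; auto. lia.
  - rewrite ds_sym, H; try lia.
Qed.

Lemma geod_rev : forall x y v K, geod x y v K -> geod y x (fun i => v (K - i)%nat) K.
Proof.
  intros x y v K [V0 [VK Vd]]. split; [|split].
  - rewrite Nat.sub_0_r. auto.
  - rewrite Nat.sub_diag. auto.
  - intros i j Hi Hj. rewrite Vd by lia. lia.
Qed.

Lemma geod_add : forall x y v K i, geod x y v K -> (i <= K)%nat -> ds x (v i) + ds (v i) y = ds x y.
Proof.
  intros x y v K i [V0 [VK Vd]] Hi. pose proof (Vd 0%nat i ltac:(lia) Hi). pose proof (Vd i K Hi (le_n _)).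
  pose proof (Vd 0%nat K ltac:(lia) (le_n _)). rewrite V0, VK in *. lia.
Qed.

Definition cat (f : nat -> X) (n : nat) (g : nat -> X) (u : nat) : X :=
  if (u <=? n)%nat then f u else g (u - n)%nat.

Lemma cat_0 : forall f n g, cat f n g 0%nat = f 0%nat.
Proof. intros. reflexivity. Qed.
Lemma cat_end : forall f n g n', f n = g 0%nat -> cat f n g (n + n')%nat = g n'.
Proof.
  intros f n g n' E. unfold cat. destruct (Nat.leb_spec (n + n') n).
  - replace n' with 0%nat by lia. rewrite Nat.add_0_r. auto.
  - f_equal. lia.
Qed.
Lemma cat_pt : forall (Q : X -> Prop) f n g n', (forall u, (u <= n)%nat -> Q (f u)) ->
  (forall u, (u <= n')%nat -> Q (g u)) -> forall u, (u <= n + n')%nat -> Q (cat f n g u).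
Proof.
  intros Q f n g n' H1 H2 u Hu. unfold cat. destruct (Nat.leb_spec u n). apply H1; lia. apply H2; lia.
Qed.
Lemma cat_step : forall (R : X -> X -> Prop) f n g n', f n = g 0%nat -> (forall u, (u < n)%nat -> R (f u) (f (S u))) ->
  (forall u, (u < n')%nat -> R (g u) (g (S u))) -> forall u, (u < n + n')%nat -> R (cat f n g u) (cat f n g (S u)).
Proof.
  intros R f n g n' E H1 H2 u Hu. unfold cat. destruct (Nat.leb_spec u n); destruct (Nat.leb_spec (S u) n).
  - apply H1; lia.
  - replace u with n by lia. rewrite E. replace (S n - n)%nat with 1%nat by lia. apply H2. lia.
  - lia.
  - replace (S u - n)%nat with (S (u - n)) by lia. apply H2. lia.
Qed.

Lemma stepA : exists E, 0 <= E /\ forall x y v K a m, geod x y v K -> chain x y a m ->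
  forall k, (k <= m)%nat -> exists i, (i <= K)%nat /\ d (a k) (v i) <= E.
Proof.
  destruct (pow_bound ((2+6*Lam)*dl) ((2+6*Lam)*M + 4 + 4*Lam*M + 2*Lam)) as [K0 HK0].
  exists (M + dl * Z.max 0 K0). split. nia.
  intros x y v K a m Hg Hc.
  pose proof Hc as [A0 [Am [Al [As Aadd]]]].
  pose proof Hg as [V0 [VK Vd]].
  assert (Dle : maxd v a K m <= M + dl * Z.max 0 K0).
  { destruct (maxd_att v a K m) as [k0 [Hk0 ED]].
    set (D := maxd v a K m) in *.
    assert (Dnn : 0 <= D). { destruct (mind_att v (a k0) K) as [i0 [_ E0]]. rewrite ED, E0. apply d_nn. }
    assert (Dpt : forall i, (i <= K)%nat -> D <= d (a k0) (v i)). { intros i Hi. rewrite ED. apply mind_le; auto. }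
    assert (Dall : forall k, (k <= m)%nat -> exists p, (p <= K)%nat /\ d (a k) (v p) <= D).
    { intros k Hk. destruct (mind_att v (a k) K) as [p [Hp Ep]]. exists p. split; auto.
      rewrite <- Ep. unfold D. apply maxd_ge; auto. }
    assert (tk : forall i j, (i <= j)%nat -> (j <= m)%nat -> d (a i) (a j) = d x (a j) - d x (a i)).
    { intros. eapply chain_t; eauto. }
    assert (tstep : forall i, (i < m)%nat -> d x (a (S i)) - d x (a i) <= M).
    { intros i Hi. rewrite <- tk by lia. apply As; auto. }
    assert (Left : exists i p, (i <= k0)%nat /\ (p <= K)%nat /\ d (a i) (v p) <= D /\ d x (a k0) - d x (a i) <= 2*D + M /\ (d (a i) (v p) = 0 \/ 2*D <= d x (a k0) - d x (a i))).
    { destruct (Z_le_gt_dec (d x (a k0)) (2*D)) as [H|H].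
      - exists 0%nat, 0%nat. rewrite A0, V0, !d_refl. split; [lia|]. split; [lia|]. split; [lia|]. split; [lia|]. left; reflexivity.
      - destruct (ivt (fun k => d x (a k)) (d x (a k0) - 2*D - 1) k0
          ltac:(cbn beta; rewrite A0, d_refl; lia) ltac:(cbn beta; lia)) as [i [Hi1 Hi2]]; cbn beta in Hi2.
        + destruct (Dall i ltac:(lia)) as [p [Hp Ep]]. pose proof (tstep i ltac:(lia)).
          exists i, p. repeat split; try lia. }
    assert (Right : exists j q, (k0 <= j)%nat /\ (j <= m)%nat /\ (q <= K)%nat /\ d (a j) (v q) <= D /\ d x (a j) - d x (a k0) <= 2*D + M /\ (d (a j) (v q) = 0 \/ 2*D <= d x (a j) - d x (a k0))).
    { destruct (Z_le_gt_dec (d x (a m) - d x (a k0)) (2*D)) as [H|H].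
      - exists m, K. rewrite Am in H. rewrite Am, VK, !d_refl. split; [lia|]. split; [lia|]. split; [lia|]. split; [lia|]. split; [lia|]. left; reflexivity.
      - destruct (ivt (fun u => d x (a (k0 + u)%nat)) (d x (a k0) + 2*D) (m - k0)
          ltac:(cbn beta; rewrite Nat.add_0_r; lia) ltac:(cbn beta; replace (k0 + (m - k0))%nat with m by lia; lia))
          as [u [Hu1 Hu2]]; cbn beta in Hu2.
        + destruct (Dall (k0 + S u)%nat ltac:(lia)) as [q [Hq Eq]]. pose proof (tstep (k0 + u)%nat ltac:(lia)).
          rewrite <- Nat.add_succ_r in *.
          exists (k0 + S u)%nat, q. repeat split; try lia. }
    destruct Left as [i [p [Hi [Hp [Eip [Lt1 Lt2]]]]]].
    destruct Right as [j [q [Hj1 [Hj2 [Hq [Ejq [Rt1 Rt2]]]]]]].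
    destruct (chain_exists (a i) (v p)) as [a1 [m1 C1]].
    destruct (chain_exists (v q) (a j)) as [a2 [m2 C2]].
    pose proof C1 as [B0 [Bm [Bl [Bs Badd]]]].
    pose proof C2 as [E0 [Em [El [Es Eadd]]]].
    set (seg := fun u => if (p <=? q)%nat then v (p + u)%nat else v (p - u)%nat).
    set (ell := if (p <=? q)%nat then (q - p)%nat else (p - q)%nat).
    assert (Sg : seg 0%nat = v p /\ seg ell = v q /\ Z.of_nat ell = ds (v p) (v q) /\ (forall u, (u <= ell)%nat -> D <= d (a k0) (seg u)) /\ (forall u, (u < ell)%nat -> d (seg u) (seg (S u)) <= M)).
    { unfold seg, ell. destruct (Nat.leb_spec p q).
      - rewrite Nat.add_0_r. replace (p + (q-p))%nat with q by lia. rewrite Vd by lia. repeat split; try lia.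
        + intros u Hu. apply Dpt. lia.
        + intros u Hu. pose proof (Hlow (v (p+u)%nat) (v (p + S u)%nat)). rewrite Vd in H0 by lia. lia.
      - rewrite Nat.sub_0_r. replace (p - (p-q))%nat with q by lia. rewrite Vd by lia. repeat split; try lia.
        + intros u Hu. apply Dpt. lia.
        + intros u Hu. pose proof (Hlow (v (p-u)%nat) (v (p - S u)%nat)). rewrite Vd in H0 by lia. replace (Z.abs (Z.of_nat (p - u) - Z.of_nat (p - S u))) with 1 in H0 by lia. lia. }
    destruct Sg as [Sg0 [Sge [Sgl [Sgp Sgs]]]].
    set (h := cat a1 m1 (cat seg ell a2)).
    set (N := (m1 + (ell + m2))%nat).
    assert (h0 : h 0%nat = a i) by (unfold h; rewrite cat_0; auto).
    assert (hN : h N = a j).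
    { unfold h, N. rewrite cat_end. rewrite cat_end; auto. rewrite Sge; auto. rewrite Bm. unfold cat. simpl. auto. }
    assert (pt1 : forall u, (u <= m1)%nat -> D <= d (a k0) (a1 u)).
    { intros u Hu. pose proof (Badd 0%nat u m1 ltac:(lia) Hu (le_n _)). rewrite B0, Bm in H.
      pose proof (d_tri (a k0) (a1 u) (v p)). pose proof (d_tri (a k0) (a1 u) (a i)).
      pose proof (Dpt p Hp). pose proof (d_nn (a i) (a1 u)). pose proof (d_nn (a1 u) (v p)).
      rewrite (d_sym (a1 u) (a i)), (d_sym (a k0) (a i)), (tk i k0) in H1 by lia.
      destruct Lt2; lia. }
    assert (pt2 : forall u, (u <= m2)%nat -> D <= d (a k0) (a2 u)).
    { intros u Hu. pose proof (Eadd 0%nat u m2 ltac:(lia) Hu (le_n _)). rewrite E0, Em in H.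
      pose proof (d_tri (a k0) (a2 u) (v q)). pose proof (d_tri (a k0) (a2 u) (a j)).
      pose proof (Dpt q Hq). pose proof (d_nn (v q) (a2 u)). pose proof (d_nn (a2 u) (a j)).
      rewrite (tk k0 j) in H1 by lia. rewrite ?(d_sym (a2 u) (v q)), ?(d_sym (a2 u) (a j)), ?(d_sym (a j) (v q)) in *.
      destruct Rt2; lia. }
    assert (hpt : forall u, (u <= N)%nat -> D <= d (a k0) (h u)).
    { unfold h, N. apply (cat_pt (fun z => D <= d (a k0) z)); auto.
      apply (cat_pt (fun z => D <= d (a k0) z)); auto. }
    assert (hst : forall u, (u < N)%nat -> d (h u) (h (S u)) <= M).
    { unfold h, N. apply (cat_step (fun z z' => d z z' <= M)); auto.
      - rewrite Bm, <- Sg0. reflexivity.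
      - apply (cat_step (fun z z' => d z z' <= M)); auto. rewrite Sge, E0. auto. }
    destruct (log2_ex N) as [kk [Hkk1 Hkk2]].
    pose proof (LL kk N h (a k0) (2*D - M) Hkk1) as LLr.
    assert (LL2 : 2*D - M - dl * Z.of_nat kk <= P2 (h 0%nat) (h N) (a k0)).
    { apply LLr.
      - intros _. pose proof (hpt 0%nat ltac:(lia)). lia.
      - intros u Hu. unfold P2. pose proof (hpt u ltac:(lia)). pose proof (hpt (S u) ltac:(lia)).
        pose proof (hst u Hu). lia. }
    rewrite h0, hN in LL2. unfold P2 in LL2.
    rewrite (d_sym (a k0) (a i)) in LL2. rewrite !tk in LL2 by lia.
    assert (HN : Z.of_nat N <= 2*D + 2 + Lam * (6*D + 2*M) + Lam).
    { unfold N. rewrite !Nat2Z.inj_add, Sgl.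
      pose proof (Hup (v p) (v q)). pose proof (d_tri (v p) (a i) (v q)). pose proof (d_tri (a i) (a j) (v q)).
      rewrite (tk i j) in * by lia. rewrite (d_sym (v p) (a i)) in *.
      assert (Q1 : d (v p) (v q) <= 6*D + 2*M) by (clear -Eip Ejq Lt1 Rt1 H0 H1; lia).
      assert (Q2 : Lam * d (v p) (v q) <= Lam * (6*D + 2*M)) by (apply Z.mul_le_mono_nonneg_l; lia).
      rewrite (d_sym (v q) (a j)) in El. clear -Bl El H Eip Ejq Q2. lia. }
    destruct Hkk2 as [Hk0'|Hk0'].
    - subst kk. change (Z.of_nat 0) with 0 in LL2. assert (Hz : 0 <= dl * Z.max 0 K0) by (apply Z.mul_nonneg_nonneg; lia).
      clear -LL2 Hz Dnn. lia.
    - assert (Z.of_nat (2^kk) < (2+6*Lam)*dl * Z.of_nat kk + ((2+6*Lam)*M + 4 + 4*Lam*M + 2*Lam)).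
      { destruct Hk0' as [Hk1' Hk0'].
        replace kk with (S (kk - 1)) at 1 by lia. rewrite Nat.pow_succ_r'.
        apply Nat2Z.inj_lt in Hk0'. rewrite Nat2Z.inj_mul. 
        assert ((2 + 6*Lam) * (2*D) <= (2+6*Lam) * (M + dl * Z.of_nat kk)) by (apply Z.mul_le_mono_nonneg_l; lia).
        nia. }
      pose proof (HK0 kk H). nia. }
  intros k Hk. destruct (mind_att v (a k) K) as [p [Hp Ep]]. exists p. split; auto.
  rewrite <- Ep. pose proof (maxd_ge v a K m k Hk). lia.
Qed.
Lemma stepB : exists H, 0 <= H /\ forall x y v K a m, geod x y v K -> chain x y a m ->
  forall s, (s <= K)%nat -> exists k, (k <= m)%nat /\ d (v s) (a k) <= H.
Proof.
  destruct stepA as [E [HE SA]].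
  set (W := Lam*(2*E+M)+Lam).
  assert (WE : W = Lam*(2*E+M)+Lam) by reflexivity. clearbody W.
  assert (HW : 0 <= W) by (rewrite WE; nia).
  exists (M * W + E). split. nia.
  intros x y v K a m Hg Hc s Hs.
  pose proof Hc as [A0 [Am [Al [As Aadd]]]].
  pose proof Hg as [V0 [VK Vd]].
  set (P := fun k => exists i, (i <= K)%nat /\ (i <= s)%nat /\ d (a k) (v i) <= E).
  destruct (last_true P m) as [k [Hk [Pk Hor]]].
  { exists 0%nat. rewrite A0, V0, d_refl. repeat split; lia. }
  destruct Pk as [i [Hi1 [Hi2 Hi3]]].
  assert (Hsi : Z.of_nat s - Z.of_nat i <= W).
  { destruct (Nat.eq_dec k m) as [Ekm|Nkm].
    - subst k. pose proof (Hup (v i) (v K)). rewrite Vd in H by lia. rewrite VK, <- Am, d_sym in H.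
      assert (Lam * d (a m) (v i) <= Lam * E) by (apply Z.mul_le_mono_nonneg_l; lia).
      rewrite WE. clear -H H0 Hi1 Hs HLam HE HM. nia.
    - destruct Hor as [Hor|Hor]; [lia|].
      destruct (SA x y v K a m Hg Hc (S k) ltac:(lia)) as [i' [Hi'1 Hi'2]].
      assert (Hi's : (s < i')%nat). { destruct (le_lt_dec i' s); auto. exfalso. apply Hor. exists i'. auto. }
      pose proof (Hup (v i) (v i')). rewrite Vd in H by lia.
      pose proof (d_tri (v i) (a k) (v i')). pose proof (d_tri (a k) (a (S k)) (v i')).
      pose proof (As k ltac:(lia)). rewrite (d_sym (v i) (a k)) in H0.
      assert (Lam * d (v i) (v i') <= Lam * (2*E+M)) by (apply Z.mul_le_mono_nonneg_l; lia).
      rewrite WE. clear -H H0 H1 H2 H3 Hi's Hi2 Hi3 Hi'2. lia. }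
  exists k. split; auto.
  pose proof (Hlow (v s) (v i)). rewrite Vd in H by lia.
  replace (Z.abs (Z.of_nat s - Z.of_nat i)) with (Z.of_nat s - Z.of_nat i) in H by lia.
  pose proof (d_tri (v s) (v i) (a k)). rewrite (d_sym (v i) (a k)) in H0.
  assert (M * (Z.of_nat s - Z.of_nat i) <= M * W) by (apply Z.mul_le_mono_nonneg_l; lia).
  lia.
Qed.

Lemma near_chain : forall x y b mb p, chain x y b mb -> P2 x y p <= dl ->
  exists u, (u <= mb)%nat /\ d p (b u) <= 2*M + 2*dl.
Proof.
  intros x y b mb p Hc HP. pose proof Hc as [B0 [Bm [Bl [Bs Badd]]]].
  unfold P2 in HP.
  destruct (Z_le_gt_dec (d x y) (d x p)) as [H|H].
  - exists mb. split; auto. rewrite Bm. rewrite (d_sym p x) in HP. lia.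
  - destruct (ivt (fun u => d x (b u)) (d x p) mb ltac:(cbn beta; rewrite B0, d_refl; apply d_nn)
       ltac:(cbn beta; rewrite Bm; lia)) as [u [Hu1 Hu2]]. cbn beta in Hu2.
    exists u. split; [lia|].
    pose proof (hyp4 x p y (b u)). unfold P2 in H0.
    pose proof (chain_end x y b mb u Hc ltac:(lia)).
    pose proof (chain_t x y b mb u (S u) Hc ltac:(lia) ltac:(lia)). pose proof (Bs u Hu1).
    rewrite (d_sym y (b u)) in H0. rewrite (d_sym p x) in HP.
    lia.
Qed.

Lemma chain_slim : forall x y z a m b mb c mc, chain x z a m -> chain x y b mb -> chain y z c mc ->
  forall k, (k <= m)%nat -> (exists u, (u <= mb)%nat /\ d (a k) (b u) <= 2*M + 2*dl) \/
                           (exists u, (u <= mc)%nat /\ d (a k) (c u) <= 2*M + 2*dl).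
Proof.
  intros x y z a m b mb c mc Ha Hb Hc k Hk.
  pose proof (chain_end x z a m k Ha Hk). pose proof (hyp4 (a k) x y z). unfold P2 in H0.
  rewrite (d_sym x (a k)) in H.
  destruct (Z_le_gt_dec (P2 x y (a k)) dl) as [H1|H1].
  - left. apply (near_chain x y b mb); auto.
  - right. apply (near_chain y z c mc); auto. unfold P2 in *. lia.
Qed.

Lemma slim : exists Bc, 0 <= Bc /\ forall x y z u K v1 K1 v2 K2, geod x z u K -> geod x y v1 K1 -> geod y z v2 K2 ->
  forall s, (s <= K)%nat -> (exists i, (i <= K1)%nat /\ ds (u s) (v1 i) <= Bc) \/
                           (exists i, (i <= K2)%nat /\ ds (u s) (v2 i) <= Bc).
Proof.
  destruct stepA as [E [HE SA]]. destruct stepB as [H [HH SB]].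
  exists (Lam * (H + (2*M+2*dl) + E) + Lam). split. nia.
  intros x y z u K v1 K1 v2 K2 Gu G1 G2 s Hs.
  destruct (chain_exists x z) as [a [m Ca]].
  destruct (chain_exists x y) as [b [mb Cb]].
  destruct (chain_exists y z) as [c [mc Cc]].
  destruct (SB x z u K a m Gu Ca s Hs) as [k [Hk Hdk]].
  assert (Hm : forall t, d (u s) t <= H + (2*M+2*dl) + E -> ds (u s) t <= Lam * (H + (2*M+2*dl) + E) + Lam).
  { intros t Ht. pose proof (Hup (u s) t).
    assert (Lam * d (u s) t <= Lam * (H + (2*M+2*dl) + E)) by (apply Z.mul_le_mono_nonneg_l; lia). lia. }
  destruct (chain_slim x y z a m b mb c mc Ca Cb Cc k Hk) as [[w [Hw Hdw]]|[w [Hw Hdw]]].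
  - destruct (SA x y v1 K1 b mb G1 Cb w Hw) as [i [Hi Hdi]]. left. exists i. split; auto.
    apply Hm. pose proof (d_tri (u s) (a k) (b w)). pose proof (d_tri (u s) (b w) (v1 i)). lia.
  - destruct (SA y z v2 K2 c mc G2 Cc w Hw) as [i [Hi Hdi]]. right. exists i. split; auto.
    apply Hm. pose proof (d_tri (u s) (a k) (c w)). pose proof (d_tri (u s) (c w) (v2 i)). lia.
Qed.

Lemma insize : exists C1, 0 <= C1 /\ forall w x y u K g1 K1 g2 K2, geod x y u K -> geod w x g1 K1 -> geod w y g2 K2 ->
  exists s, (s <= K)%nat /\ 2 * ds w (u s) <= ds w x + ds w y - ds x y + C1.
Proof.
  destruct slim as [Bc [HB SL]].
  exists (4*Bc+4). split. lia.
  intros w x y u K g1 K1 g2 K2 Gu G1 G2.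
  pose proof (geod_rev w x g1 K1 G1) as G1r.
  pose proof Gu as [U0 [UK Ud]]. pose proof G1 as [W0 [WK Wd]]. pose proof G2 as [Y0 [YK Yd]].
  set (P := fun s => exists i, (i <= K1)%nat /\ ds (u s) (g1 i) <= Bc).
  destruct (last_true P K) as [s [Hs [Ps Hor]]].
  { exists K1. split; auto. rewrite U0, WK, ds_refl. lia. }
  destruct Ps as [i1 [Hi1 Hd1]].
  assert (Q : exists i2, (i2 <= K2)%nat /\ ds (u s) (g2 i2) <= Bc + 1).
  { destruct (Nat.eq_dec s K) as [E|E].
    - subst s. exists K2. split; auto. rewrite UK, YK, ds_refl. lia.
    - destruct Hor as [Hor|Hor]; [lia|].
      destruct (SL x w y u K _ K1 g2 K2 Gu G1r G2 (S s) ltac:(lia)) as [[i [Hi Hdi]]|[i [Hi Hdi]]].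
      + exfalso. apply Hor. exists (K1 - i)%nat. split; [lia|]. auto.
      + exists i. split; auto. pose proof (ds_tri (u s) (u (S s)) (g2 i)). rewrite Ud in H by lia.
        lia. }
  destruct Q as [i2 [Hi2 Hd2]].
  exists s. split; auto.
  pose proof (geod_add w x g1 K1 i1 G1 Hi1). pose proof (geod_add w y g2 K2 i2 G2 Hi2).
  pose proof (geod_add x y u K s Gu Hs).
  pose proof (ds_tri w (g1 i1) (u s)). pose proof (ds_tri w (g2 i2) (u s)).
  pose proof (ds_tri x (g1 i1) (u s)). pose proof (ds_tri (u s) (g2 i2) y).
  rewrite (ds_sym (g1 i1) (u s)) in *. rewrite (ds_sym (g2 i2) (u s)) in *.
  rewrite (ds_sym x (g1 i1)) in *.
  lia.
Qed.

Theorem hyp_ds : exists D, 0 <= D /\ forall w x y z,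
  Z.min (ds w x + ds w y - ds x y) (ds w y + ds w z - ds y z) - D <= ds w x + ds w z - ds x z.
Proof.
  destruct slim as [Bc [HB SL]]. destruct insize as [C1 [HC IS]].
  exists (C1 + 2*Bc). split. lia.
  intros w x y z.
  destruct (geod_exists x z) as [u [K Gu]].
  destruct (geod_exists x y) as [v1 [K1 G1]].
  destruct (geod_exists y z) as [v2 [K2 G2]].
  destruct (geod_exists w x) as [g1 [L1 H1]].
  destruct (geod_exists w z) as [g2 [L2 H2]].
  destruct (IS w x z u K g1 L1 g2 L2 Gu H1 H2) as [s [Hs Hds]].
  destruct (SL x y z u K v1 K1 v2 K2 Gu G1 G2 s Hs) as [[i [Hi Hdi]]|[i [Hi Hdi]]].
  - pose proof (geod_add x y v1 K1 i G1 Hi).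
    pose proof (ds_tri w (v1 i) x). pose proof (ds_tri w (v1 i) y). pose proof (ds_tri w (u s) (v1 i)).
    rewrite (ds_sym (v1 i) x) in *. lia.
  - pose proof (geod_add y z v2 K2 i G2 Hi).
    pose proof (ds_tri w (v2 i) y). pose proof (ds_tri w (v2 i) z). pose proof (ds_tri w (u s) (v2 i)).
    rewrite (ds_sym (v2 i) y) in *. lia.
Qed.
End Abs.

Definition flat (n : nat) (a : vec) := forall i, (1 <= i)%nat -> (i < n)%nat -> a i = 0.

Lemma ht_flat : forall n a, (ht n a <= 1)%nat -> flat n a.
Proof.
  unfold ht, flat. induction n as [|n IH]; intros a H i Hi1 Hi2; [lia|].
  simpl in H. destruct (Z.eqb_spec (a n) 0) as [E|E].
  - destruct (Nat.eq_dec i n). subst; auto. apply IH; auto. lia.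
  - lia.
Qed.

Lemma flat_ht : forall n a, flat n a -> (ht n a <= 1)%nat.
Proof.
  unfold ht, flat. induction n as [|n IH]; intros a H; simpl; [lia|].
  destruct n as [|n'].
  - destruct (Z.eqb (a 0%nat) 0); simpl; lia.
  - rewrite (H (S n')) by lia. simpl Z.eqb. cbv iota. apply IH. intros i Hi1 Hi2. apply H; lia.
Qed.

Lemma vcmp_flat : forall n a b, (1 <= n)%nat -> flat n a -> flat n b -> vcmp n a b = Z.compare (a 0%nat) (b 0%nat).
Proof.
  unfold vcmp, flat. intros n a b Hn Ha Hb.
  assert (forall m, (1 <= m)%nat -> (m <= n)%nat -> vcmp_aux a b m = Z.compare (a 0%nat) (b 0%nat)).
  { induction m as [|m IH]; intros H1 H2; [lia|]. simpl.
    destruct m as [|m'].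
    - simpl. destruct (Z.compare (a 0%nat) (b 0%nat)); auto.
    - rewrite (Ha (S m')), (Hb (S m')) by lia. simpl. apply IH; lia. }
  apply H; lia.
Qed.

Lemma vle_flat : forall n a b, (1 <= n)%nat -> flat n a -> flat n b -> (vle n a b <-> a 0%nat <= b 0%nat).
Proof.
  intros n a b Hn Ha Hb. unfold vle. rewrite vcmp_flat by auto.
  destruct (Z.compare_spec (a 0%nat) (b 0%nat)); split; intros; try lia; try discriminate.
  exfalso; auto.
Qed.

Lemma vmin_flat : forall n a b, (1 <= n)%nat -> flat n a -> flat n b ->
  flat n (vmin n a b) /\ vmin n a b 0%nat = Z.min (a 0%nat) (b 0%nat).
Proof.
  intros n a b Hn Ha Hb. unfold vmin. rewrite vcmp_flat by auto.
  destruct (Z.compare_spec (a 0%nat) (b 0%nat)); split; auto; lia.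
Qed.

Lemma flat_add : forall n a b, flat n a -> flat n b -> flat n (vadd a b).
Proof. unfold flat, vadd. intros. rewrite H, H0 by auto. lia. Qed.
Lemma flat_sub : forall n a b, flat n a -> flat n b -> flat n (vsub a b).
Proof. unfold flat, vsub. intros. rewrite H, H0 by auto. lia. Qed.
Lemma flat_scal : forall n k a, flat n a -> flat n (vscal k a).
Proof. unfold flat, vscal. intros. rewrite H by auto. lia. Qed.
Lemma flat_e1 : forall n k, flat n (e1 k).
Proof. unfold flat, e1. intros. destruct i; [lia|auto]. Qed.
Lemma flat_zero : forall n, flat n vzero.
Proof. unfold flat, vzero. auto. Qed.

Module Grp.
Section Grp.
Context {G : Type} (mul : G -> G -> G) (inv : G -> G) (one : G).
Hypothesis Hg : is_group mul inv one.

Lemma assoc : forall x y z, mul x (mul y z) = mul (mul x y) z.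
Proof. apply (grp_assoc _ _ _ Hg). Qed.
Lemma one_l : forall x, mul one x = x.
Proof. apply (grp_one_l _ _ _ Hg). Qed.
Lemma inv_l : forall x, mul (inv x) x = one.
Proof. apply (grp_inv_l _ _ _ Hg). Qed.
Lemma inv_r : forall x, mul x (inv x) = one.
Proof.
  intros x. rewrite <- (one_l (mul x (inv x))). rewrite <- (inv_l (inv x)) at 1.
  rewrite <- assoc. rewrite (assoc (inv x) x (inv x)). rewrite inv_l, one_l. apply inv_l.
Qed.
Lemma one_r : forall x, mul x one = x.
Proof. intros x. rewrite <- (inv_l x), assoc, inv_r, one_l. auto. Qed.
Lemma cancel_l : forall a b c, mul a b = mul a c -> b = c.
Proof.
  intros a b c H. rewrite <- (one_l b), <- (one_l c), <- (inv_l a), <- !assoc, H. auto.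
Qed.
Lemma inv_mul : forall a b, inv (mul a b) = mul (inv b) (inv a).
Proof.
  intros a b. apply (cancel_l (mul a b)). rewrite inv_r.
  rewrite <- assoc, (assoc b (inv b)), inv_r, one_l, inv_r. auto.
Qed.
Lemma inv_inv : forall a, inv (inv a) = a.
Proof. intros a. apply (cancel_l (inv a)). rewrite inv_r, inv_l. auto. Qed.
Lemma inv_one : inv one = one.
Proof. rewrite <- (one_l (inv one)). apply inv_r. Qed.
Lemma mul_inv_cancel : forall a b, mul (inv a) (mul a b) = b.
Proof. intros. rewrite assoc, inv_l, one_l. auto. Qed.
Lemma mul_cancel_inv : forall a b, mul a (mul (inv a) b) = b.
Proof. intros. rewrite assoc, inv_r, one_l. auto. Qed.
End Grp.
End Grp.

Section Main.
Context {G : Type} (mul : G -> G -> G) (inv : G -> G) (one : G) (n : nat) (l : G -> vec) (delta : vec).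
Hypothesis Hgrp : is_group mul inv one.
Hypothesis Hlf : length_function mul inv one n l.
Hypothesis Hreg : regular_lf mul inv n l delta.
Hypothesis Hhyp : hyperbolic_lf mul inv n l delta.
Hypothesis Hht : ht n delta = 1%nat.
Definition G1 g := (ht n (l g) <= 1)%nat.
Hypothesis Hsub : is_subgroup mul inv one G1.
Hypothesis Hprop : proper_lf n l.
Let assoc := Grp.assoc mul inv one Hgrp.
Let one_l := Grp.one_l mul inv one Hgrp.
Let one_r := Grp.one_r mul inv one Hgrp.
Let inv_l := Grp.inv_l mul inv one Hgrp.
Let inv_r := Grp.inv_r mul inv one Hgrp.
Let inv_mul := Grp.inv_mul mul inv one Hgrp.
Let inv_inv := Grp.inv_inv mul inv one Hgrp.
Let inv_one := Grp.inv_one mul inv one Hgrp.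
Let mul_inv_cancel := Grp.mul_inv_cancel mul inv one Hgrp.
Let mul_cancel_inv := Grp.mul_cancel_inv mul inv one Hgrp.

Lemma n1 : (1 <= n)%nat.
Proof. destruct n; [simpl in Hht; discriminate|lia]. Qed.
Lemma dflat : flat n delta.
Proof. apply ht_flat. lia. Qed.
Lemma G1flat : forall g, G1 g -> flat n (l g).
Proof. intros g H. apply ht_flat. auto. Qed.
Lemma G1_one : G1 one. Proof. apply Hsub. Qed.
Lemma G1_mul : forall x y, G1 x -> G1 y -> G1 (mul x y). Proof. apply Hsub. Qed.
Lemma G1_inv : forall x, G1 x -> G1 (inv x). Proof. apply Hsub. Qed.

Definition L g := l g 0%nat.
Lemma L_one : L one = 0.
Proof. pose proof Hlf as [H _]. apply H. apply n1. Qed.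
Lemma L_nn : forall g, G1 g -> 0 <= L g.
Proof.
  intros g Hg. pose proof Hlf as [_ [H _]]. specialize (H g).
  apply (vle_flat n vzero (l g) n1 (flat_zero n) (G1flat g Hg)) in H. auto.
Qed.
Lemma L_inv : forall g, L (inv g) = L g.
Proof. intros g. pose proof Hlf as [_ [_ [H _]]]. apply H. apply n1. Qed.
Lemma L_sub : forall g h, G1 g -> G1 h -> L (mul g h) <= L g + L h.
Proof.
  intros g h Hg Hh. pose proof Hlf as [_ [_ [_ H]]]. specialize (H g h).
  apply (vle_flat n _ _ n1 (G1flat _ (G1_mul _ _ Hg Hh)) (flat_add _ _ _ (G1flat _ Hg) (G1flat _ Hh))) in H.
  exact H.
Qed.

Definition c2' f g := L f + L g - L (mul (inv f) g).

Lemma L_hyp : forall f g h, G1 f -> G1 g -> G1 h -> Z.min (c2' f h) (c2' g h) - 2 * delta 0%nat <= c2' f g.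
Proof.
  intros f g h Hf Hg Hh. pose proof (Hhyp f g h) as Hhyp0.
  assert (Fc : forall a b, G1 a -> G1 b -> flat n (c2 mul inv l a b)).
  { intros a b Ha Hb. unfold c2. apply flat_sub. apply flat_add; apply G1flat; auto.
    apply G1flat. apply G1_mul; auto. apply G1_inv; auto. }
  destruct (vmin_flat n (c2 mul inv l f h) (c2 mul inv l g h) n1 (Fc f h Hf Hh) (Fc g h Hg Hh)) as [F1 E1].
  apply (vle_flat n _ _ n1) in Hhyp0.
  - unfold vsub, vscal in Hhyp0. rewrite E1 in Hhyp0. unfold c2, vsub, vadd in Hhyp0. unfold c2', L. exact Hhyp0.
  - apply flat_sub; auto. apply flat_scal. apply dflat.
  - apply Fc; auto.
Qed.

Lemma L_reg : forall g h, G1 g -> G1 h -> exists gc gd, G1 gc /\ G1 gd /\ 2 * L gc = c2' g h /\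
   g = mul gc gd /\ L g = L gc + L gd.
Proof.
  intros g h Hg Hh. destruct (Hreg g h) as [gc [hc [gd [hd [E1 [E2 [E3 [E4 [E5 [E6 E7]]]]]]]]]].
  assert (Fc : flat n (c2 mul inv l g h)).
  { unfold c2. apply flat_sub. apply flat_add; apply G1flat; auto.
    apply G1flat. apply G1_mul; auto. apply G1_inv; auto. }
  assert (Hgc : flat n (l gc)).
  { intros i Hi1 Hi2. specialize (E1 i Hi2). rewrite (Fc i Hi1 Hi2) in E1. unfold vscal in E1. lia. }
  assert (Hgd : flat n (l gd)).
  { intros i Hi1 Hi2. specialize (E5 i Hi2). unfold vadd in E5. rewrite (G1flat g Hg i Hi1 Hi2), (Hgc i Hi1 Hi2) in E5. lia. }
  exists gc, gd. split; [apply flat_ht; auto|]. split; [apply flat_ht; auto|].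
  split. { specialize (E1 0%nat n1). unfold vscal, c2, vsub, vadd in E1. unfold c2', L. lia. }
  split; auto. specialize (E5 0%nat n1). unfold vadd in E5. unfold L. auto.
Qed.

Section Reach.
Variable Sg : list G.
Hypothesis HS : forall s, In s Sg -> G1 s.

Lemma reach_G1 : forall k g, reach mul inv one Sg k g -> G1 g.
Proof.
  induction k as [|k IH]; simpl; intros g H.
  - subst. apply G1_one.
  - destruct H as [H|[s [y [Hs [Hy [E|E]]]]]]; auto; subst; apply G1_mul; auto. apply G1_inv; auto.
Qed.

Lemma reach_mono : forall k k' g, reach mul inv one Sg k g -> (k <= k')%nat -> reach mul inv one Sg k' g.
Proof.
  intros k k' g H Hk. induction Hk; auto. simpl. left. auto.
Qed.

Lemma reach_app : forall k2 k1 a b, reach mul inv one Sg k1 a -> reach mul inv one Sg k2 b ->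
  reach mul inv one Sg (k1 + k2) (mul a b).
Proof.
  induction k2 as [|k2 IH]; intros k1 a b Ha Hb; simpl in Hb.
  - subst. rewrite one_r by auto. rewrite Nat.add_0_r. auto.
  - rewrite Nat.add_succ_r. simpl. destruct Hb as [Hb|[s [y [Hs [Hy [E|E]]]]]].
    + left. apply IH; auto.
    + right. exists s, (mul a y). split; auto. split. apply IH; auto. left. subst. apply assoc; auto.
    + right. exists s, (mul a y). split; auto. split. apply IH; auto. right. subst. apply assoc; auto.
Qed.

Lemma reach_one_s : forall s, In s Sg -> reach mul inv one Sg 1 s /\ reach mul inv one Sg 1 (inv s).
Proof.
  intros s Hs. split; simpl; right; exists s, one; (split; [auto|]); (split; [reflexivity|]).
  - left. rewrite one_l; auto.
  - right. rewrite one_l; auto.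
Qed.

Lemma reach_inv : forall k a, reach mul inv one Sg k a -> reach mul inv one Sg k (inv a).
Proof.
  induction k as [|k IH]; intros a H; simpl in H.
  - subst. simpl. apply inv_one; auto.
  - destruct H as [H|[s [y [Hs [Hy [E|E]]]]]].
    + simpl. left. auto.
    + subst. rewrite inv_mul by auto. replace (S k) with (1 + k)%nat by lia.
      apply reach_app. apply (proj2 (reach_one_s s Hs)). apply IH; auto.
    + subst. rewrite inv_mul, inv_inv by auto. replace (S k) with (1 + k)%nat by lia.
      apply reach_app. apply (proj1 (reach_one_s s Hs)). apply IH; auto.
Qed.

Lemma reach_L : forall MS, 0 <= MS -> (forall s, In s Sg -> L s <= MS) -> forall k g, reach mul inv one Sg k g -> L g <= MS * Z.of_nat k.
Proof.
  intros MS HM0 HMS. induction k as [|k IH]; intros g H; simpl in H.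
  - subst. rewrite L_one. lia.
  - rewrite Nat2Z.inj_succ. destruct H as [H|[s [y [Hs [Hy [E|E]]]]]].
    + specialize (IH g H). nia.
    + subst. pose proof (L_sub y s (reach_G1 k y Hy) (HS s Hs)). specialize (IH y Hy). specialize (HMS s Hs). nia.
    + subst. pose proof (L_sub y (inv s) (reach_G1 k y Hy) (G1_inv _ (HS s Hs))). rewrite L_inv in H.
      specialize (IH y Hy). specialize (HMS s Hs). nia.
Qed.

Lemma reach_c2 : forall MS, (forall s, In s Sg -> L s <= MS) -> forall g, G1 g ->
  forall k h, reach mul inv one Sg k h -> 2 <= c2' g h -> exists h', G1 h' /\ 2 <= c2' g h' <= 2 * MS + 1.
Proof.
  intros MS HMS g Hg. induction k as [|k IH]; intros h H Hc; simpl in H.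
  - subst. unfold c2' in Hc. rewrite one_r, L_one, L_inv in Hc. lia.
  - destruct H as [H|[s [y [Hs [Hy [E|E]]]]]].
    + apply (IH h H Hc).
    + destruct (Z_le_gt_dec 2 (c2' g y)) as [H2|H2]. { apply (IH y Hy H2). }
      exists h. split. { apply (reach_G1 (S k)). simpl. right. exists s, y. auto. }
      split; auto. subst h. pose proof (HS s Hs) as Gs. pose proof (reach_G1 k y Hy) as Gy.
      pose proof (L_sub y s Gy Gs).
      assert (E1 : mul (mul (inv g) (mul y s)) (inv s) = mul (inv g) y).
      { rewrite <- assoc, <- (assoc y s), inv_r, one_r. auto. }
      pose proof (L_sub (mul (inv g) (mul y s)) (inv s) (G1_mul _ _ (G1_inv _ Hg) (G1_mul _ _ Gy Gs)) (G1_inv _ Gs)).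
      rewrite E1, L_inv in H0. specialize (HMS s Hs). unfold c2' in *. lia.
    + destruct (Z_le_gt_dec 2 (c2' g y)) as [H2|H2]. { apply (IH y Hy H2). }
      exists h. split. { apply (reach_G1 (S k)). simpl. right. exists s, y. auto. }
      split; auto. subst h. pose proof (HS s Hs) as Gs. pose proof (reach_G1 k y Hy) as Gy.
      pose proof (L_sub y (inv s) Gy (G1_inv _ Gs)). rewrite L_inv in H.
      assert (E1 : mul (mul (inv g) (mul y (inv s))) s = mul (inv g) y).
      { rewrite <- assoc, <- (assoc y (inv s)), inv_l, one_r. auto. }
      pose proof (L_sub (mul (inv g) (mul y (inv s))) s (G1_mul _ _ (G1_inv _ Hg) (G1_mul _ _ Gy (G1_inv _ Gs))) Gs).
      rewrite E1 in H0. specialize (HMS s Hs). unfold c2' in *. lia.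
Qed.

Lemma list_bound : forall (Lst : list G), exists MS, 1 <= MS /\ forall s, In s Lst -> G1 s -> L s <= MS.
Proof.
  induction Lst as [|a t IH].
  - exists 1. split. lia. intros s [].
  - destruct IH as [MS [H1 H2]]. exists (Z.max MS (L a)). split. lia.
    intros s [E|Hs] Gs. subst. lia. specialize (H2 s Hs Gs). lia.
Qed.

End Reach.

Lemma least_nat : forall P : nat -> Prop, (exists k, P k) -> exists k, P k /\ forall j, P j -> (k <= j)%nat.
Proof.
  intros P [k Hk].
  assert (forall N k, (k <= N)%nat -> P k -> exists m, P m /\ forall j, P j -> (m <= j)%nat).
  { induction N as [|N IH]; intros k0 Hk0 Pk0.
    - exists k0. split; auto. intros. lia.
    - destruct (classic (exists j, (j < k0)%nat /\ P j)) as [[j [Hj Pj]]|Hn].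
      + apply (IH j); auto. lia.
      + exists k0. split; auto. intros j Pj. destruct (le_lt_dec k0 j); auto. exfalso. apply Hn. eauto. }
  apply (H k k); auto.
Qed.

Section Gen.
Variable S0 : list G.
Hypothesis Hgen0 : generates mul inv one G1 S0.

Lemma split_ex : exists M0, 1 <= M0 /\ forall g, G1 g -> 1 <= L g ->
  exists a, G1 a /\ L a + L (mul (inv a) g) = L g /\ 1 <= L a <= M0.
Proof.
  destruct Hgen0 as [HS HR].
  destruct (list_bound S0) as [M0 [HM0 HB]].
  exists M0. split; auto. intros g Hg Hg1.
  destruct (HR g Hg) as [k Hk].
  destruct (reach_c2 S0 HS M0 (fun s Hs => HB s Hs (HS s Hs)) g Hg k g Hk) as [h [Hh Hc]].
  { unfold c2'. rewrite inv_l, L_one. lia. }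
  destruct (L_reg g h Hg Hh) as [gc [gd [Gc [Gd [E1 [E2 E3]]]]]].
  assert (Eg : mul (inv gc) g = gd) by (rewrite E2; apply mul_inv_cancel).
  exists gc. split; auto. rewrite Eg. lia.
Qed.
End Gen.

Definition X := {g : G | G1 g}.
Lemma sig_eq : forall a b : X, proj1_sig a = proj1_sig b -> a = b.
Proof. intros [a Ha] [b Hb]. simpl. intros E. subst. f_equal. apply proof_irrelevance. Qed.

Lemma G1_xy : forall x y : X, G1 (mul (inv (proj1_sig x)) (proj1_sig y)).
Proof. intros [x Hx] [y Hy]. simpl. apply G1_mul; auto. apply G1_inv; auto. Qed.

Definition dX (x y : X) : Z := L (mul (inv (proj1_sig x)) (proj1_sig y)).

Lemma dX_refl : forall x, dX x x = 0.
Proof. intros x. unfold dX. rewrite inv_l. apply L_one. Qed.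
Lemma dX_sym : forall x y, dX x y = dX y x.
Proof. intros x y. unfold dX. rewrite <- L_inv, inv_mul, inv_inv. auto. Qed.
Lemma dX_tri : forall x y z, dX x z <= dX x y + dX y z.
Proof.
  intros x y z. unfold dX.
  replace (mul (inv (proj1_sig x)) (proj1_sig z)) with (mul (mul (inv (proj1_sig x)) (proj1_sig y)) (mul (inv (proj1_sig y)) (proj1_sig z))).
  apply L_sub; apply G1_xy.
  rewrite <- assoc, mul_cancel_inv. auto.
Qed.
Lemma dX_hyp : forall w a b c, Z.min (P2 X dX a b w) (P2 X dX b c w) - Z.max 0 (2 * delta 0%nat) <= P2 X dX a c w.
Proof.
  intros w a b c.
  assert (K : forall u v : X, mul (inv (mul (inv (proj1_sig w)) (proj1_sig u))) (mul (inv (proj1_sig w)) (proj1_sig v)) = mul (inv (proj1_sig u)) (proj1_sig v)).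
  { intros u v. rewrite inv_mul, inv_inv, <- assoc, mul_cancel_inv. auto. }
  pose proof (L_hyp _ _ _ (G1_xy w a) (G1_xy w c) (G1_xy w b)) as H.
  unfold c2' in H. rewrite !K in H. unfold P2, dX. 
  pose proof (dX_sym c b). unfold dX in H0. lia.
Qed.

Section Word.
Variable Sg : list G.
Hypothesis HgenS : generates mul inv one G1 Sg.
Lemma HSg : forall s, In s Sg -> G1 s.
Proof. apply HgenS. Qed.

Lemma wlen_ex : forall g, G1 g -> exists k, is_wlen mul inv one Sg g k.
Proof.
  intros g Hg. destruct (proj2 HgenS g Hg) as [k Hk].
  destruct (least_nat (fun k => reach mul inv one Sg k g) (ex_intro _ k Hk)) as [m [Hm1 Hm2]].
  exists m. split; auto.
Qed.
Lemma wlen_unique : forall g k1 k2, is_wlen mul inv one Sg g k1 -> is_wlen mul inv one Sg g k2 -> k1 = k2.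
Proof. intros g k1 k2 [A1 B1] [A2 B2]. specialize (B1 k2 A2). specialize (B2 k1 A1). lia. Qed.

Definition wl (g : G) (Hg : G1 g) : nat := proj1_sig (constructive_indefinite_description _ (wlen_ex g Hg)).
Lemma wl_spec : forall g Hg, is_wlen mul inv one Sg g (wl g Hg).
Proof. intros. unfold wl. destruct (constructive_indefinite_description _ _). auto. Qed.

Definition dsX (x y : X) : Z := Z.of_nat (wl _ (G1_xy x y)).
Lemma dsX_eq : forall x y k, is_wlen mul inv one Sg (mul (inv (proj1_sig x)) (proj1_sig y)) k -> dsX x y = Z.of_nat k.
Proof. intros x y k H. unfold dsX. f_equal. eapply wlen_unique. apply wl_spec. auto. Qed.
Lemma dsX_le : forall x y k, reach mul inv one Sg k (mul (inv (proj1_sig x)) (proj1_sig y)) -> dsX x y <= Z.of_nat k.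
Proof. intros x y k H. unfold dsX. pose proof (wl_spec _ (G1_xy x y)) as [_ B]. specialize (B k H). lia. Qed.
Lemma dsX_reach : forall x y, reach mul inv one Sg (Z.to_nat (dsX x y)) (mul (inv (proj1_sig x)) (proj1_sig y)).
Proof. intros x y. unfold dsX. rewrite Nat2Z.id. apply wl_spec. Qed.
Lemma dsX_nn : forall x y, 0 <= dsX x y.
Proof. intros. unfold dsX. lia. Qed.

Lemma dsX_refl : forall x, dsX x x = 0.
Proof. intros x. pose proof (dsX_le x x 0). rewrite inv_l in H. specialize (H eq_refl). pose proof (dsX_nn x x). lia. Qed.
Lemma dsX_sym_le : forall x y, dsX y x <= dsX x y.
Proof.
  intros x y. apply dsX_le. pose proof (reach_inv Sg _ _ (dsX_reach x y)).
  rewrite inv_mul, inv_inv in H. unfold dsX in H. rewrite Nat2Z.id in H. exact H.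
Qed.
Lemma dsX_sym : forall x y, dsX x y = dsX y x.
Proof. intros. pose proof (dsX_sym_le x y). pose proof (dsX_sym_le y x). lia. Qed.
Lemma dsX_tri : forall x y z, dsX x z <= dsX x y + dsX y z.
Proof.
  intros x y z. pose proof (reach_app Sg _ _ _ _ (dsX_reach x y) (dsX_reach y z)).
  rewrite <- assoc, mul_cancel_inv in H. apply dsX_le in H. rewrite Nat2Z.inj_add, !Z2Nat.id in H by apply dsX_nn. auto.
Qed.

Lemma reach_path : forall k g, reach mul inv one Sg k g -> forall x : X, exists (j : nat) (v : nat -> X),
  (j <= k)%nat /\ v 0%nat = x /\ proj1_sig (v j) = mul (proj1_sig x) g /\
  forall i, (i < j)%nat -> exists s, In s Sg /\ (proj1_sig (v (S i)) = mul (proj1_sig (v i)) s \/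
                                                  proj1_sig (v (S i)) = mul (proj1_sig (v i)) (inv s)).
Proof.
  induction k as [|k IH]; intros g H x; simpl in H.
  - subst. exists 0%nat, (fun _ => x). split; auto. split; auto. split. simpl. rewrite one_r. auto. intros; lia.
  - destruct H as [H|[s [y [Hs [Hy Eg]]]]].
    + destruct (IH g H x) as [j [v [A B]]]. exists j, v. split; auto.
    + destruct (IH y Hy x) as [j [v [Hj [V0 [Vj Vs]]]]].
      assert (Gp : G1 (mul (proj1_sig x) g)).
      { apply G1_mul. apply (proj2_sig x). apply (reach_G1 Sg HSg (S k)). simpl. right. exists s, y. auto. }
      set (p := exist G1 (mul (proj1_sig x) g) Gp : X).
      exists (S j), (fun i => if Nat.eqb i (S j) then p else v i). split; [lia|]. split; [simpl; auto|].
      split. { rewrite Nat.eqb_refl. simpl. auto. }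
      intros i Hi. destruct (Nat.eqb_spec i (S j)); [lia|]. destruct (Nat.eqb_spec (S i) (S j)).
      * assert (i = j) by lia. subst i. exists s. split; auto. simpl. rewrite Vj.
        destruct Eg as [Eg|Eg]; subst g; [left|right]; apply assoc.
      * apply Vs. lia.
Qed.

Lemma dsX_path : forall x y : X, exists (j : nat) (v : nat -> X), Z.of_nat j <= dsX x y /\
   v 0%nat = x /\ v j = y /\ forall i, (i < j)%nat -> dsX (v i) (v (S i)) <= 1.
Proof.
  intros x y. destruct (reach_path _ _ (dsX_reach x y) x) as [j [v [Hj [V0 [Vj Vs]]]]].
  exists j, v. split. pose proof (dsX_nn x y). lia.
  split; auto. split. { apply sig_eq. rewrite Vj. apply mul_cancel_inv. }
  intros i Hi. destruct (Vs i Hi) as [s [Hs [E|E]]]; apply (dsX_le _ _ 1); rewrite E, mul_inv_cancel;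
  [apply (proj1 (reach_one_s Sg s Hs)) | apply (proj2 (reach_one_s Sg s Hs))].
Qed.

Lemma dsX_low : exists MS, 1 <= MS /\ forall x y, dX x y <= MS * dsX x y.
Proof.
  destruct (list_bound Sg) as [MS [H1 H2]]. exists MS. split; auto. intros x y.
  unfold dX. pose proof (reach_L Sg HSg MS ltac:(lia) (fun s Hs => H2 s Hs (HSg s Hs)) _ _ (dsX_reach x y)).
  rewrite Z2Nat.id in H by apply dsX_nn. auto.
Qed.

Lemma list_W : forall Lst : list G, exists W, forall g, In g Lst -> G1 g -> reach mul inv one Sg W g.
Proof.
  induction Lst as [|a t IH].
  - exists 0%nat. intros g [].
  - destruct IH as [W HW]. destruct (classic (G1 a)) as [Ga|Ga].
    + destruct (proj2 HgenS a Ga) as [ka Hka]. exists (Nat.max W ka). intros g [E|Hg] Gg.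
      * subst. apply (reach_mono Sg ka); auto. lia.
      * apply (reach_mono Sg W); auto. lia.
    + exists W. intros g [E|Hg] Gg. subst. contradiction. auto.
Qed.

Lemma W_bound : exists W : nat, (1 <= W)%nat /\ forall g, G1 g -> reach mul inv one Sg (W * (Z.to_nat (L g) + 1)) g.
Proof.
  destruct (split_ex Sg HgenS) as [M0 [HM0 Hsp]].
  destruct (Hprop (Z.to_nat M0)) as [Lst HL].
  destruct (list_W Lst) as [W0 HW0].
  assert (Hin : forall g, G1 g -> L g <= M0 -> reach mul inv one Sg W0 g).
  { intros g Gg Hg. apply HW0; auto. apply HL. apply (vle_flat n _ _ n1 (G1flat g Gg) (flat_e1 n _)).
    unfold e1. unfold L in Hg. lia. }
  exists (S W0). split. lia.
  assert (forall N g, G1 g -> L g <= Z.of_nat N -> reach mul inv one Sg (S W0 * (N + 1)) g).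
  { induction N as [|N IH]; intros g Gg Hg.
    - apply (reach_mono Sg W0). apply Hin; auto. lia. lia.
    - destruct (Z_le_gt_dec (L g) 0) as [H0|H0].
      + apply (reach_mono Sg W0). apply Hin; auto. lia. nia.
      + destruct (Hsp g Gg ltac:(lia)) as [a [Ga [E1 E2]]].
        assert (Gb : G1 (mul (inv a) g)) by (apply G1_mul; auto; apply G1_inv; auto).
        pose proof (IH (mul (inv a) g) Gb ltac:(lia)) as Rb.
        pose proof (Hin a Ga ltac:(lia)) as Ra.
        pose proof (reach_app Sg _ _ _ _ Ra Rb). rewrite mul_cancel_inv in H.
        apply (reach_mono Sg _ _ _ H). nia. }
  intros g Gg. apply H; auto. pose proof (L_nn g Gg). lia.
Qed.

Lemma dsX_up : exists W, 1 <= W /\ forall x y, dsX x y <= W * dX x y + W.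
Proof.
  destruct W_bound as [W [HW HWb]]. exists (Z.of_nat W). split. lia. intros x y.
  pose proof (dsX_le x y _ (HWb _ (G1_xy x y))). unfold dX. pose proof (L_nn _ (G1_xy x y)).
  rewrite Nat2Z.inj_mul, Nat2Z.inj_add, Z2Nat.id in H by auto. lia.
Qed.
End Word.

Lemma conj2 : fin_generated mul inv one G1 -> word_hyperbolic mul inv one G1.
Proof.
  intros [S0 HS0]. exists S0. split; auto.
  destruct (split_ex S0 HS0) as [M0 [HM0 Hsp]].
  destruct (dsX_low S0 HS0) as [MS [HMS Hlow]].
  destruct (dsX_up S0 HS0) as [W [HW Hup]].
  destruct (hyp_ds X dX (dsX S0 HS0) (Z.max 0 (2 * delta 0%nat)) (Z.max M0 MS) W
    ltac:(lia) ltac:(lia) HW dX_refl dX_sym dX_tri dX_hyp) as [D [HD HypD]].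
  - intros x y Hxy. destruct (Hsp _ (G1_xy x y) Hxy) as [a [Ga [E1 E2]]].
    assert (Gz : G1 (mul (proj1_sig x) a)) by (apply G1_mul; auto; apply (proj2_sig x)).
    exists (exist G1 (mul (proj1_sig x) a) Gz). unfold dX. simpl.
    rewrite mul_inv_cancel. rewrite inv_mul, <- assoc. split; auto. lia.
  - apply dsX_refl.
  - apply dsX_sym.
  - apply dsX_tri.
  - apply dsX_path.
  - intros x y. pose proof (Hlow x y). pose proof (dsX_nn S0 HS0 x y).
    assert (MS * dsX S0 HS0 x y <= Z.max M0 MS * dsX S0 HS0 x y) by (apply Z.mul_le_mono_nonneg_r; lia). lia.
  - apply Hup.
  - exists (Z.to_nat D). intros w x y z Hw Hx Hy Hz dwx dwy dwz dxy dyz dxz H1 H2 H3 H4 H5 H6.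
    set (w' := exist G1 w Hw : X). set (x' := exist G1 x Hx : X).
    set (y' := exist G1 y Hy : X). set (z' := exist G1 z Hz : X).
    pose proof (dsX_eq S0 HS0 w' x' dwx H1). pose proof (dsX_eq S0 HS0 w' y' dwy H2).
    pose proof (dsX_eq S0 HS0 w' z' dwz H3). pose proof (dsX_eq S0 HS0 x' y' dxy H4).
    pose proof (dsX_eq S0 HS0 y' z' dyz H5). pose proof (dsX_eq S0 HS0 x' z' dxz H6).
    specialize (HypD w' x' y' z'). rewrite H, H0, H7, H8, H9, H10 in HypD. lia.
Qed.

Lemma conj3 : forall S, generates mul inv one G1 S -> quasi_isometric_word mul inv one G1 S (dl mul inv l).
Proof.
  intros S HS.
  destruct (dsX_low S HS) as [MS [HMS Hlow]].
  destruct (dsX_up S HS) as [W [HW Hup]].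
  exists (fun x => x), (Z.max MS W), W. split. lia. split. lia. split. auto.
  split.
  - intros x y k Hx Hy Hk.
    set (x' := exist G1 x Hx : X). set (y' := exist G1 y Hy : X).
    pose proof (dsX_eq S HS x' y' k Hk). pose proof (Hlow x' y'). pose proof (Hup x' y').
    rewrite H in H0, H1. unfold dX in H0, H1. simpl in H0, H1. unfold dl.
    pose proof (L_nn _ (G1_xy x' y')). simpl in H2. unfold L in *.
    assert (MS * Z.of_nat k <= Z.max MS W * Z.of_nat k) by (apply Z.mul_le_mono_nonneg_r; lia).
    assert (W * l (mul (inv x) y) 0%nat <= Z.max MS W * l (mul (inv x) y) 0%nat) by (apply Z.mul_le_mono_nonneg_r; lia).
    lia.
  - intros y Hy. exists y. split; auto. unfold dl. rewrite inv_l. pose proof L_one. unfold L in H. lia.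
Qed.
End Main.

Theorem lemma3p10 (G : Type) (mul : G -> G -> G) (inv : G -> G) (one : G)
  (n : nat) (l : G -> vec) (delta : vec) :
  is_group mul inv one ->
  fin_generated mul inv one (fun _ => True) ->
  torsion_free mul one (fun _ => True) ->
  length_function mul inv one n l ->
  proper_lf n l ->
  regular_lf mul inv n l delta ->
  hyperbolic_lf mul inv n l delta ->
  ht n delta = 1%nat ->
  let G1 := fun g => (ht n (l g) <= 1)%nat in
  is_subgroup mul inv one G1 ->
  fin_generated mul inv one G1 ->
  isolated mul inv one G1 ->
  torsion_free mul one G1 /\
  word_hyperbolic mul inv one G1 /\
  (forall S, generates mul inv one G1 S ->
     quasi_isometric_word mul inv one G1 S (dl mul inv l)).
Proof.
  intros Hgrp HfgG Htf Hlf Hprop Hreg Hhyp Hht G1' Hsub Hfg1 Hiso.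
  split. { intros g _ m Hm Hp. exact (Htf g I m Hm Hp). }
  split.
  - exact (conj2 mul inv one n l delta Hgrp Hlf Hreg Hhyp Hht Hsub Hprop Hfg1).
  - exact (conj3 mul inv one n l delta Hgrp Hlf Hreg Hhyp Hht Hsub Hprop).
Qed.
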